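(* For $i=1,2$ let $C_i=C_{i+}\oplus C_{i-}$ with $C_{i\pm}=\mathbb{Z}_D^n$, let $P_i=\begin{bmatrix}I_n&0\\0&-I_n\end{bmatrix}$, and let $\delta_i$ be boundary operators on $C_i$ compatible with $P_i$. Let $C=C_1\otimes C_2$, $\partial=\delta_1\otimes I+P_1\otimes\delta_2$, and $C_+=C_{1+}\otimes C_{2+}\oplus C_{1-}\otimes C_{2-}\le C$. Fix $n'\le n$ and suppose that the distance of each of the codes $\mathrm{CSS}(C_i,\delta_i,P_i)$ and $\mathrm{CSS}(C_i,\delta_i,-P_i)$ is at least $2(n-n')+1$ ($i=1,2$). If $h\in C_+\cap\ker\partial$ has vanishing reduced matrix, then $h\in\operatorname{im}\partial$. Likewise, if $h\in C_+\cap\ker\partial^T$ has vanishing reduced matrix, then $h\in\operatorname{im}\partial^T$.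
   Context: $D$ is an odd prime, $\mathbb{Z}_D$ the field with $D$ elements; transposes are with respect to the standard (product) bases. A boundary operator compatible with $P$ on $C_+\oplus C_-$ is a linear map $\delta$ with $\delta^2=0$, $\delta P+P\delta=0$, i.e. $\delta=\begin{bmatrix}0&\delta_{+-}\\ \delta_{-+}&0\end{bmatrix}$ with $\delta_{+-}:C_-\to C_+$, $\delta_{-+}:C_+\to C_-$. The code $\mathrm{CSS}(C,\delta,P)$ is the qudit CSS code over $\mathbb{Z}_D$ whose physical qudits correspond to the standard basis vectors of $C_+$, whose $Z$-type stabilizer generators are the columns of $\delta_{+-}$ and whose $X$-type stabilizer generators are the rows of $\delta_{-+}$; its distance is the minimum weight (number of nonzero coordinates) of a vector in $(\ker\delta_{-+}\setminus\operatorname{im}\delta_{+-})\cup(\ker\delta_{+-}^T\setminus\operatorname{im}\delta_{-+}^T)$. $\mathrm{CSS}(C,\delta,-P)$ is the same construction with the roles of $C_+$ and $C_-$ (and of $\delta_{+-}$, $\delta_{-+}$) exchanged. An element $\psi\in C_+$ is viewed as a pair of $n\times n$ matrices $\psi_+\in C_{1+}\otimes C_{2+}$, $\psi_-\in C_{1-}\otimes C_{2-}$; its reduced matrix is the pair of $n'\times n'$ submatrices of $\psi_+$ and $\psi_-$ formed by their first $n'$ rows and first $n'$ columns. *)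

(* Defs.v *)
From HB Require Import structures.
From mathcomp Require Import all_boot all_order all_algebra.
Set Implicit Arguments. Unset Strict Implicit. Unset Printing Implicit Defensive.
Import GRing.Theory.
Local Open Scope ring_scope.

(* Vectors of C_i = C_{i+} (+) C_{i-} are indexed by 'I_(n + n):
   the first n coordinates (lshift) form C_{i+}, the last n (rshift) C_{i-}. *)

Definition Pmx (R : pzRingType) (n : nat) : 'M[R]_(n + n) :=
  block_mx 1%:M 0 0 (- 1%:M).

Definition compatible_boundary (R : pzRingType) (n : nat) (d : 'M[R]_(n + n)) :=
  d *m d = 0 /\ d *m Pmx R n + Pmx R n *m d = 0.

(* delta_{+-} : C_- -> C_+  and  delta_{-+} : C_+ -> C_- (acting on column vectors) *)
Definition dpm (R : pzRingType) (n : nat) (d : 'M[R]_(n + n)) : 'M[R]_n := ursubmx d.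
Definition dmp (R : pzRingType) (n : nat) (d : 'M[R]_(n + n)) : 'M[R]_n := dlsubmx d.

Definition wt (R : pzRingType) (n : nat) (v : 'cV[R]_n) : nat :=
  #|[set i : 'I_n | v i 0 != 0]|.

Definition in_im (R : pzRingType) (m n : nat) (A : 'M[R]_(m, n)) (v : 'cV[R]_m) : Prop :=
  exists w : 'cV[R]_n, v = A *m w.

(* The CSS code with Z-stabilizer generators the columns of Apm = delta_{+-}
   and X-stabilizer generators the rows of Amp = delta_{-+} has distance
   at least dd: every vector of (ker Amp \ im Apm) u (ker Apm^T \ im Amp^T)
   has weight >= dd. *)
Definition css_dist_ge (R : pzRingType) (n : nat) (Apm Amp : 'M[R]_n) (dd : nat) : Prop :=
  forall v : 'cV[R]_n,
    ((Amp *m v = 0 /\ ~ in_im Apm v) \/ (Apm^T *m v = 0 /\ ~ in_im Amp^T v)) ->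
    (dd <= wt v)%N.

Definition CSS_P_dist_ge (R : pzRingType) (n : nat) (d : 'M[R]_(n + n)) (dd : nat) :=
  css_dist_ge (dpm d) (dmp d) dd.
(* distance of CSS(C, delta, -P) >= dd : roles of C_+ and C_- exchanged *)
Definition CSS_mP_dist_ge (R : pzRingType) (n : nat) (d : 'M[R]_(n + n)) (dd : nat) :=
  css_dist_ge (dmp d) (dpm d) dd.

(* Elements of C = C_1 (x) C_2 are represented by their coefficient arrays
   X : 'M_(n1, n2) in the product basis: X i j = coefficient of e_i (x) f_j.
   The operator A (x) B acts on such arrays as X |-> A X B^T. *)
Definition tens_app (R : pzRingType) (m1 n1 m2 n2 : nat)
  (A : 'M[R]_(m1, n1)) (B : 'M[R]_(m2, n2)) (X : 'M[R]_(n1, n2)) : 'M[R]_(m1, m2) :=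
  A *m X *m B^T.

Definition bdry (R : pzRingType) (n : nat) (d1 d2 : 'M[R]_(n + n))
  (X : 'M[R]_(n + n, n + n)) : 'M[R]_(n + n, n + n) :=
  tens_app d1 1%:M X + tens_app (Pmx R n) d2 X.

Definition bdryT (R : pzRingType) (n : nat) (d1 d2 : 'M[R]_(n + n))
  (X : 'M[R]_(n + n, n + n)) : 'M[R]_(n + n, n + n) :=
  tens_app d1^T (1%:M)^T X + tens_app (Pmx R n)^T d2^T X.

(* C_+ = C_{1+}(x)C_{2+} (+) C_{1-}(x)C_{2-} : the off-diagonal blocks vanish *)
Definition in_Cplus (R : pzRingType) (n : nat) (X : 'M[R]_(n + n, n + n)) : Prop :=
  ursubmx X = 0 /\ dlsubmx X = 0.

Definition psi_p (R : pzRingType) (n : nat) (X : 'M[R]_(n + n, n + n)) : 'M[R]_n := ulsubmx X.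
Definition psi_m (R : pzRingType) (n : nat) (X : 'M[R]_(n + n, n + n)) : 'M[R]_n := drsubmx X.

Definition reduced_zero (R : pzRingType) (n n' : nat) (X : 'M[R]_(n + n, n + n)) : Prop :=
  forall i j : 'I_n, (i < n')%N -> (j < n')%N -> psi_p X i j = 0 /\ psi_m X i j = 0.

(* Main.v *)
Require Import Defs.
From HB Require Import structures.
From mathcomp Require Import all_boot all_order all_algebra.
From mathcomp Require Import zify.
From Stdlib Require Import Classical.
Set Implicit Arguments. Unset Strict Implicit. Unset Printing Implicit Defensive.
Import GRing.Theory.
Local Open Scope ring_scope.

Lemma colspace (F : fieldType) m p q (M : 'M[F]_(m,p)) (K : 'M[F]_(m,q)) :
  (forall z : 'rV[F]_m, z *m M = 0 -> z *m K = 0) -> exists L, K = M *m L.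
Proof.
move=> H.
have : (K^T <= M^T)%MS.
  rewrite submxE; apply/eqP/matrixP => i j.
  set C := cokermx M^T.
  have E : (col j C)^T *m M = (M^T *m col j C)^T by rewrite trmx_mul trmxK.
  have : (col j C)^T *m M = 0 by rewrite E colE mulmxA mulmx_coker mul0mx trmx0.
  move/H => /(congr1 (fun X => X^T)).
  rewrite trmx_mul trmxK trmx0 colE mulmxA => /(congr1 (fun X : 'M[F]_(q,1) => X i 0)).
  by rewrite -colE !mxE.
case/submxP => D HD; exists D^T.
by rewrite -[K]trmxK HD trmx_mul trmxK.
Qed.

Definition Qc (F : fieldType) N (G d : 'M[F]_N) :=
  forall y : 'cV[F]_N, d *m y = 0 -> G *m y = 0 -> exists c, y = d *m c.
Definition Qr (F : fieldType) N (G e : 'M[F]_N) :=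
  forall y : 'rV[F]_N, y *m e = 0 -> y *m G = 0 -> exists c, y = c *m e.

Arguments Qc {F N}.
Arguments Qr {F N}.

Lemma clean_c (F : fieldType) N (G e : 'M[F]_N) : G *m G = G -> Qr G e ->
  forall q (V : 'M[F]_(N,q)), e *m V = 0 -> exists W, (1%:M - G) *m (V - e *m W) = 0.
Proof.
move=> HG HQ q V HV.
have [L HL] : exists L, (1%:M - G) *m V = ((1%:M - G) *m e) *m L.
  apply: colspace => z Hz.
  have Hy1 : (z *m (1%:M - G)) *m e = 0 by rewrite -mulmxA.
  have Hy2 : (z *m (1%:M - G)) *m G = 0.
    by rewrite -mulmxA mulmxBl mul1mx HG subrr mulmx0.
  have [c Hc] := HQ _ Hy1 Hy2.
  by rewrite mulmxA Hc -mulmxA HV mulmx0.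
by exists L; rewrite mulmxBr HL mulmxA subrr.
Qed.

Lemma clean_r (F : fieldType) N (G d : 'M[F]_N) : G *m G = G -> Qc G d ->
  forall q (V : 'M[F]_(q,N)), V *m d = 0 -> exists W, (V - W *m d) *m (1%:M - G) = 0.
Proof.
move=> HG HQ q V HV.
have HG' : G^T *m G^T = G^T by rewrite -trmx_mul HG.
have HQ' : Qr G^T d^T.
  move=> y Hy1 Hy2.
  have H1 : d *m y^T = 0 by rewrite -[d]trmxK -trmx_mul Hy1 trmx0.
  have H2 : G *m y^T = 0 by rewrite -[G]trmxK -trmx_mul Hy2 trmx0.
  have [c Hc] := HQ _ H1 H2.
  by exists c^T; rewrite -[y]trmxK Hc trmx_mul.
have HV' : d^T *m V^T = 0 by rewrite -trmx_mul HV trmx0.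
have [W HW] := clean_c HG' HQ' HV'.
exists W^T.
have := congr1 trmx HW.
rewrite trmx_mul !linearB /= !trmxK trmx_mul trmxK trmx1 trmx0; apply.
Qed.
Lemma card_ge n m : (m <= n)%N -> #|[set a : 'I_n | (m <= a)%N]| = (n - m)%N.
Proof.
move=> Hmn.
rewrite -sum1_card.
rewrite (eq_bigl (fun a : 'I_n => (m <= a)%N)); last by move=> a; rewrite inE.
rewrite -(big_mkord (fun a => (m <= a)%N) (fun _ => 1%N)).
rewrite (@big_cat_nat _ _ _ m 0 n _ _ (leq0n m) Hmn) /=.
rewrite big_nat_cond big1 ?add0n; last by move=> i /andP[/andP[_ ]]; rewrite ltnNge => /negbTE ->.
rewrite big_nat_cond (eq_bigl (fun i => (m <= i < n)%N && true)); last first.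
  by move=> i /=; case: (m <= i)%N; rewrite ?andbF ?andbT.
by rewrite -big_nat_cond sum_nat_const_nat muln1.
Qed.
Lemma main_alg (R : pzRingType) N (P G d1 e2 h sT : 'M[R]_N) :
  P *m P = 1%:M -> G *m G = G -> d1 *m d1 = 0 -> e2 *m e2 = 0 ->
  d1 *m P + P *m d1 = 0 -> G *m h *m G = 0 ->
  d1 *m h + P *m h *m e2 = 0 -> e2 *m sT *m e2 = e2 ->
  (forall z : 'rV[R]_N, z *m d1 = 0 -> exists w : 'rV[R]_N, (z - w *m d1) *m (1%:M - G) = 0) ->
  (forall V : 'M[R]_N, e2 *m V = 0 -> exists W : 'M[R]_N, (1%:M - G) *m (V - e2 *m W) = 0) ->
  (forall K : 'M[R]_N, (forall z : 'rV[R]_N, z *m d1 = 0 -> z *m K = 0) -> exists L, K = d1 *m L) ->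
  exists g, h = d1 *m g + P *m g *m e2.
Proof.
move=> HP HG Hd1 He2 HdP HGh Hcyc hs cleanr cleanc colsp.
pose pi : 'M[R]_N := 1%:M - sT *m e2 - e2 *m sT.
have pie : pi *m e2 = 0.
  by rewrite /pi !mulmxBl mul1mx hs -mulmxA He2 mulmx0 subr0 subrr.
have epi : e2 *m pi = 0.
  by rewrite /pi !mulmxBr mulmx1 !mulmxA hs He2 mul0mx subr0 subrr.
have pipi : pi *m pi = pi - pi *m sT *m e2.
  by rewrite {2}/pi !mulmxBr mulmx1 !mulmxA pie mul0mx subr0.
have key : e2 *m sT + sT *m e2 + (pi *m pi + pi *m sT *m e2) = 1%:M.
  rewrite pipi subrK /pi -[1%:M - _ - _]addrA -opprD [e2 *m sT + _]addrC addrC.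
  by rewrite [X in X = _]addrC subrK.
clearbody pi.
have Hdh : d1 *m h = - (P *m h *m e2) by move/eqP: Hcyc; rewrite addr_eq0 => /eqP.
have HPd : P *m d1 = - (d1 *m P) by move/eqP: HdP; rewrite addrC addr_eq0 => /eqP.
have Hhe : h *m e2 = d1 *m P *m h.
  have -> : h *m e2 = P *m (P *m h *m e2) by rewrite !mulmxA HP mul1mx.
  by rewrite -(opprK (P *m h *m e2)) -Hdh mulmxN mulmxA HPd mulNmx opprK.
have d1hpi : d1 *m h *m pi = 0 by rewrite Hdh mulNmx -mulmxA epi mulmx0 oppr0.
have stepA : forall z : 'rV_N, z *m d1 = 0 -> z *m (h *m pi) = 0.
  move=> z Hz.
  have [w Hw] := cleanr z Hz.
  have [W HW] := cleanc pi epi.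
  move: Hw HW.
  set z' := z - w *m d1; set V' := pi - e2 *m W => Hw HW.
  have Ez : z = z' + w *m d1 by rewrite /z' subrK.
  have Epi : pi = V' + e2 *m W by rewrite /V' subrK.
  have z'G : z' = z' *m G.
    by apply/eqP; rewrite -subr_eq0 -Hw mulmxBr mulmx1.
  have V'G : V' = G *m V'.
    by apply/eqP; rewrite -subr_eq0 -HW mulmxBl mul1mx.
  have z'd : z' *m d1 = 0 by rewrite /z' mulmxBl -mulmxA Hd1 mulmx0 subr0.
  clearbody z' V'.
  rewrite Ez mulmxDl.
  have -> : w *m d1 *m (h *m pi) = 0 by rewrite !mulmxA -(mulmxA w) -(mulmxA w) d1hpi mulmx0.
  rewrite addr0 Epi !mulmxDr.
  have -> : z' *m (h *m (e2 *m W)) = 0.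
    by rewrite !mulmxA -(mulmxA z' h) Hhe !mulmxA z'd !mul0mx.
  have -> : z' *m (h *m V') = z' *m (G *m h *m G) *m V'.
    by rewrite {1}z'G {1}V'G !mulmxA.
  by rewrite HGh mulmx0 mul0mx addr0.
have [L HL] := colsp _ stepA.
exists (P *m h *m sT + L *m pi + P *m h *m pi *m sT).
have t1 : d1 *m (P *m h *m sT) = h *m e2 *m sT by rewrite !mulmxA -Hhe.
have t2 : P *m (P *m h *m sT) *m e2 = h *m sT *m e2 by rewrite !mulmxA HP mul1mx.
have t3 : d1 *m (L *m pi) = h *m pi *m pi by rewrite mulmxA -HL.
have t4 : P *m (L *m pi) *m e2 = 0 by rewrite -!mulmxA pie !mulmx0.
have t5 : d1 *m (P *m h *m pi *m sT) = 0.
  by rewrite !mulmxA -Hhe -(mulmxA h e2 pi) epi mulmx0 mul0mx.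
have t6 : P *m (P *m h *m pi *m sT) *m e2 = h *m pi *m sT *m e2.
  by rewrite !mulmxA HP mul1mx.
rewrite !mulmxDr !mulmxDl t1 t2 t3 t4 t5 t6 !addr0 addrACA.
have Hk : h = h *m (e2 *m sT + sT *m e2 + (pi *m pi + pi *m sT *m e2)) by rewrite key mulmx1.
by rewrite {1}Hk !mulmxDr !mulmxA.
Qed.

Lemma main_abs (F : fieldType) N (P G d1 e2 h : 'M[F]_N) :
  P *m P = 1%:M -> G *m G = G -> d1 *m d1 = 0 -> e2 *m e2 = 0 ->
  d1 *m P + P *m d1 = 0 -> Qc G d1 -> Qr G e2 -> G *m h *m G = 0 ->
  d1 *m h + P *m h *m e2 = 0 -> exists g, h = d1 *m g + P *m g *m e2.
Proof.
move=> HP HG Hd1 He2 HdP Hq1 Hq2 HGh Hcyc.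
apply: (@main_alg _ _ P G d1 e2 h (pinvmx e2)) => //.
- by apply: mulmxKpV; apply: submx_refl.
- by move=> z Hz; apply: clean_r HG Hq1 _ _ Hz.
- by move=> V HV; apply: clean_c HG Hq2 _ _ HV.
- by move=> K; apply: colspace.
Qed.

Lemma Qr_of_Qc (F : fieldType) N (G e : 'M[F]_N) : G^T = G -> Qc G e^T -> Qr G e.
Proof.
move=> HGs HQ y H1 H2.
have H1' : e^T *m y^T = 0 by rewrite -trmx_mul H1 trmx0.
have H2' : G *m y^T = 0 by rewrite -HGs -trmx_mul H2 trmx0.
have [c Hc] := HQ _ H1' H2'.
by exists c^T; rewrite -[y]trmxK Hc trmx_mul trmxK.
Qed.

Definition goodb n m (i : 'I_(n+n)) : bool := (i < m)%N || ((n <= i)%N && (i < n + m)%N).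
Definition Gm (F : fieldType) n m : 'M[F]_(n+n) := diag_mx (\row_i (@goodb n m i)%:R).

Lemma Gm_sym (F : fieldType) n m : (Gm F n m)^T = Gm F n m.
Proof. exact: tr_diag_mx. Qed.

Lemma Gm_idem (F : fieldType) n m : Gm F n m *m Gm F n m = Gm F n m.
Proof.
rewrite /Gm mul_diag_mx; apply/matrixP => i j; rewrite !mxE.
by case: (@goodb n m i); case: (i == j); rewrite ?mulr1n ?mulr0n ?mul1r ?mul0r.
Qed.

Lemma Gm_zero (F : fieldType) n m (y : 'cV[F]_(n+n)) : Gm F n m *m y = 0 ->
  forall a : 'I_n, (a < m)%N -> usubmx y a 0 = 0 /\ dsubmx y a 0 = 0.
Proof.
move=> H a Ha.
have E i : @goodb n m i -> y i 0 = 0.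
  move=> gi; have := congr1 (fun M : 'M[F]_(n+n,1) => M i 0) H.
  by rewrite /Gm mul_diag_mx !mxE gi mul1r.
split; rewrite mxE; apply: E; rewrite /goodb /=; lia.
Qed.

Lemma wt_le (F : fieldType) n m (v : 'cV[F]_n) : (m <= n)%N ->
  (forall a : 'I_n, (a < m)%N -> v a 0 = 0) -> (wt v <= n - m)%N.
Proof.
move=> Hmn H; rewrite /wt -(card_ge Hmn).
apply: subset_leq_card; apply/subsetP => a; rewrite !inE.
by apply: contraR; rewrite -ltnNge => /H ->; rewrite eqxx.
Qed.

Lemma dblock (F : fieldType) n (d : 'M[F]_(n+n)) : (2%:R : F) != 0 ->
  compatible_boundary d -> d = block_mx 0 (dpm d) (dmp d) 0.
Proof.
move=> H2 [_ HdP].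
have Ed : d = block_mx (ulsubmx d) (dpm d) (dmp d) (drsubmx d) by rewrite submxK.
move: HdP Ed; set a := ulsubmx d; set b := dpm d; set c := dmp d; set e := drsubmx d.
move=> HdP Ed; rewrite Ed /Pmx !mulmx_block !mulmx1 !mulmx0 !mul0mx !mul1mx in HdP.
rewrite !addr0 !add0r !mulmxN !mulmx1 add_block_mx -block_mx0 in HdP.
case/eq_block_mx: HdP => Ha _ _ He.
have z2 : forall X : 'M[F]_n, X + X = 0 -> X = 0.
  move=> X HX; have : (2%:R : F) *: X == 0 by rewrite scaler_nat mulr2n HX.
  by rewrite scaler_eq0 (negbTE H2) => /eqP.
rewrite {1}Ed (z2 _ Ha); congr block_mx.
apply: z2; move: He; rewrite mulNmx mul1mx -opprD => /eqP; rewrite oppr_eq0 => /eqP //.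
Qed.

Lemma Qc_both (F : fieldType) n m (d : 'M[F]_(n+n)) : (2%:R : F) != 0 -> (m <= n)%N ->
  compatible_boundary d -> CSS_P_dist_ge d (2 * (n - m)).+1 ->
  CSS_mP_dist_ge d (2 * (n - m)).+1 ->
  Qc (Gm F n m) d /\ Qc (Gm F n m) d^T.
Proof.
move=> H2 Hmn Hc HP HmP.
have Ed := dblock H2 Hc.
move: Ed HP HmP; rewrite /CSS_P_dist_ge /CSS_mP_dist_ge.
set A := dpm d; set B := dmp d => Ed HP HmP.
have EdT : d^T = block_mx 0 B^T A^T 0 by rewrite {1}Ed tr_block_mx !trmx0.
split=> y Hdy HGy.
- have Hy := vsubmxK y.
  have [w1 w2] : (wt (usubmx y) <= n - m)%N /\ (wt (dsubmx y) <= n - m)%N.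
    by split; apply: wt_le => // a Ha; have [? ?] := Gm_zero HGy Ha.
  move: Hy w1 w2 Hdy; set y1 := usubmx y; set y2 := dsubmx y => Hy w1 w2 Hdy.
  rewrite Ed -Hy mul_block_col !mul0mx add0r addr0 -col_mx0 in Hdy.
  case/eq_col_mx: Hdy => HA HB.
  have [a Ha] : in_im A y1.
    apply: NNPP => Hn; have := HP y1 (or_introl (conj HB Hn)); lia.
  have [b Hb] : in_im B y2.
    apply: NNPP => Hn; have := HmP y2 (or_introl (conj HA Hn)); lia.
  exists (col_mx b a).
  by rewrite Ed mul_block_col !mul0mx add0r addr0 -Ha -Hb.
- have Hy := vsubmxK y.
  have [w1 w2] : (wt (usubmx y) <= n - m)%N /\ (wt (dsubmx y) <= n - m)%N.
    by split; apply: wt_le => // a Ha; have [? ?] := Gm_zero HGy Ha.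
  move: Hy w1 w2 Hdy; set y1 := usubmx y; set y2 := dsubmx y => Hy w1 w2 Hdy.
  rewrite EdT -Hy mul_block_col !mul0mx add0r addr0 -col_mx0 in Hdy.
  case/eq_col_mx: Hdy => HB HA.
  have [b Hb] : in_im B^T y1.
    apply: NNPP => Hn; have := HP y1 (or_intror (conj HA Hn)); lia.
  have [a Ha] : in_im A^T y2.
    apply: NNPP => Hn; have := HmP y2 (or_intror (conj HB Hn)); lia.
  exists (col_mx a b).
  by rewrite EdT mul_block_col !mul0mx add0r addr0 -Ha -Hb.
Qed.

Lemma GhG (F : fieldType) n m (h : 'M[F]_(n+n)) : (m <= n)%N ->
  in_Cplus h -> reduced_zero m h -> Gm F n m *m h *m Gm F n m = 0.
Proof.
move=> Hmn [Hur Hdl] Hred; apply/matrixP => i j.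
rewrite /Gm mul_mx_diag mxE mul_diag_mx !mxE.
case: (boolP (@goodb n m i)) => gi; last by rewrite !mul0r.
case: (boolP (@goodb n m j)) => gj; last by rewrite mulr0.
rewrite mul1r mulr1; move: gi gj; rewrite /goodb.
case: (splitP i) => a Ea; case: (splitP j) => b Eb => gi gj.
- have -> : i = lshift n a by apply: val_inj.
  have -> : j = lshift n b by apply: val_inj.
  have Ha := ltn_ord a; have Hb := ltn_ord b.
  have [H _] := Hred a b ltac:(lia) ltac:(lia).
  by move: H; rewrite /psi_p !mxE.
- have -> : i = lshift n a by apply: val_inj.
  have -> : j = rshift n b by apply: val_inj.
  by have := congr1 (fun M : 'M[F]_n => M a b) Hur; rewrite !mxE.
- have -> : i = rshift n a by apply: val_inj.
  have -> : j = lshift n b by apply: val_inj.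
  by have := congr1 (fun M : 'M[F]_n => M a b) Hdl; rewrite !mxE.
- have -> : i = rshift n a by apply: val_inj.
  have -> : j = rshift n b by apply: val_inj.
  have Ha := ltn_ord a; have Hb := ltn_ord b.
  have [_ H] := Hred a b ltac:(lia) ltac:(lia).
  by move: H; rewrite /psi_m !mxE.
Qed.

Lemma Pmx_tr (F : pzRingType) n : (Pmx F n)^T = Pmx F n.
Proof. by rewrite /Pmx tr_block_mx !trmx0 trmx1 linearN /= trmx1. Qed.

Lemma Pmx_sq (F : fieldType) n : Pmx F n *m Pmx F n = 1%:M.
Proof.
rewrite /Pmx mulmx_block !mulmx1 !mulmx0 !mul0mx !addr0 !add0r mulmxN mulNmx mul1mx opprK.
by rewrite -scalar_mx_block.
Qed.

Theorem lemma4 (D : nat) (HD : prime D) (Hodd : odd D) (n n' : nat) (Hn' : (n' <= n)%N)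
  (d1 d2 : 'M['F_D]_(n + n))
  (Hd1 : compatible_boundary d1) (Hd2 : compatible_boundary d2)
  (H1P : CSS_P_dist_ge d1 (2 * (n - n')).+1) (H1mP : CSS_mP_dist_ge d1 (2 * (n - n')).+1)
  (H2P : CSS_P_dist_ge d2 (2 * (n - n')).+1) (H2mP : CSS_mP_dist_ge d2 (2 * (n - n')).+1) :
  (forall h : 'M['F_D]_(n + n, n + n),
      in_Cplus h -> bdry d1 d2 h = 0 -> reduced_zero n' h ->
      exists g : 'M['F_D]_(n + n, n + n), h = bdry d1 d2 g) /\
  (forall h : 'M['F_D]_(n + n, n + n),
      in_Cplus h -> bdryT d1 d2 h = 0 -> reduced_zero n' h ->
      exists g : 'M['F_D]_(n + n, n + n), h = bdryT d1 d2 g).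
Proof.
have H2 : (2%:R : 'F_D) != 0.
  rewrite -(dvdn_pcharf (pchar_Fp HD)).
  apply/negP => Hdv; have := dvdn_leq (isT : (0 < 2)%N) Hdv.
  have := prime_gt1 HD; move: Hodd; case: D {HD H1P H1mP H2P H2mP d1 d2 Hd1 Hd2 Hdv} => [|[|[|k]]] //.
have [Q1 Q1T] := Qc_both H2 Hn' Hd1 H1P H1mP.
have [Q2 Q2T] := Qc_both H2 Hn' Hd2 H2P H2mP.
have HGG := Gm_idem 'F_D n n'.
have HGs := Gm_sym 'F_D n n'.
case: Hd1 => Hd1a Hd1b; case: Hd2 => Hd2a Hd2b.
split=> h Hc Hcyc Hred; have HGh := GhG Hn' Hc Hred.
- move: Hcyc; rewrite /bdry /tens_app. rewrite (trmx1 (fintype_ordinal__canonical__GRing_PzRing (Zp_trunc (pdiv D)))) mulmx1 => Hcyc.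
  have Hq2 : Qr (Gm 'F_D n n') d2^T by apply: Qr_of_Qc; rewrite // trmxK.
  have He2 : d2^T *m d2^T = 0 by rewrite -trmx_mul Hd2a trmx0.
  have [g Hg] := main_abs (Pmx_sq 'F_D n) HGG Hd1a He2 Hd1b Q1 Hq2 HGh Hcyc.
  by exists g; rewrite mulmx1.
- move: Hcyc; rewrite /bdryT /tens_app !trmxK mulmx1 Pmx_tr => Hcyc.
  have Hq2 : Qr (Gm 'F_D n n') d2 by apply: Qr_of_Qc.
  have He1 : d1^T *m d1^T = 0 by rewrite -trmx_mul Hd1a trmx0.
  have HdP : d1^T *m Pmx 'F_D n + Pmx 'F_D n *m d1^T = 0.
    have -> : d1^T *m Pmx 'F_D n + Pmx 'F_D n *m d1^T = (d1 *m Pmx 'F_D n + Pmx 'F_D n *m d1)^T.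
      by rewrite linearD /= !trmx_mul Pmx_tr addrC.
    by rewrite Hd1b trmx0.
  have [g Hg] := main_abs (Pmx_sq 'F_D n) HGG He1 Hd2a HdP Q1T Hq2 HGh Hcyc.
  by exists g; rewrite mulmx1.
Qed.
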